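(* Let $p$ be a prime, $q=p^l$, $m\ge1$, $n=2m$, $N=q^n-1$. Let $r=\rho(q-1)+1$ with $0\leqslant\rho\leqslant n-1$, and let $I\subseteq M_r$ satisfy $\{q,\,q-2,\,|q-4|\}\cap I=\emptyset$ if $\rho$ is odd and $\{1,3\}\cap I=\emptyset$ if $\rho$ is even. Let $\delta=q^{n-\rho}-1$ and $\mathcal{I}_{n-\rho}=\{q^{n-\rho}-q^j\mid 0\le j\le n-\rho-1\}$. Let $x=(x_g)_{g\in\mathbb{F}_{q^n}^*}$ be a codeword of $\mathcal{C}_q(r,I,n)^*$ of Hamming weight $\delta$, let $\Lambda_s=\sum_{g\in\mathbb{F}_{q^n}^*}x_g g^{s}$ for integers $s\ge0$, and let $\sigma(X)=\prod_{g:\,x_g\neq0}(1-gX)=1+\sum_{j=1}^{\delta}\sigma_jX^j$ be the locator polynomial of $x$. Then: (i) $\Lambda_1=\Lambda_2=\cdots=\Lambda_{\delta-1}=0$; (ii) for $u\in[1,\delta-1]$: if $u\notin\mathcal{I}_{n-\rho}$ then $\Lambda_{\delta+u}=0$ and $\sigma_u=0$; if $u\in\mathcal{I}_{n-\rho}$ then $\sigma_u=-\Lambda_{\delta+u}/\Lambda_\delta$ (in particular $\Lambda_\delta\ne0$); (iii) $\sigma(X)=1-\sum_{u\in\mathcal{I}_{n-\rho}}\frac{\Lambda_{\delta+u}}{\Lambda_\delta}X^u$.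
   Context: Let $\alpha$ be a primitive element of $\mathbb{F}_{q^n}$. Every integer $0\le u\le q^n-1$ is written $u=\sum_{i=0}^{n-1}u_iq^i$, $u_i\in\{0,\dots,q-1\}$; $\mathrm{wt}_q(u)=\sum u_i$, $O(u)=\sum_{i\text{ odd}}u_i$, $E(u)=\sum_{i\text{ even}}u_i$. For $-1\le r<n(q-1)$, $Z_r=\{\alpha^u\mid 0<u\le q^n-1,\ \mathrm{wt}_q(u)\le n(q-1)-r-1\}$. For $0\le r\le n(q-1)$ and integer $k\ge0$, $\Theta^{(r)}_k=\{\alpha^u\mid 0\le u\le q^n-1,\ \mathrm{wt}_q(u)=n(q-1)-r,\ |O(u)-E(u)|=k\}$. $M_r$ is the set of even (resp. odd) integers $k\in[0,m(q-1)]$ when $r$ is even (resp. odd). For $I\subseteq M_r$: $\overline I=M_r\setminus I$, $Z_{r,I}=Z_r\cup\bigcup_{k\in\overline I}\Theta^{(r)}_k$. $\mathcal{C}_q(r,I,n)^*$ is the cyclic code of length $N$ over $\mathbb{F}_q$ with coordinates indexed by $\mathbb{F}_{q^n}^*$ (coordinate $i$ labelled $\alpha^i$) consisting of all $x=(x_g)$ with $\sum_g x_g g^{u}=0$ for every $u\in[1,N]$ with $\alpha^u\in Z_{r,I}$. *)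

(* Defs.v *)
From HB Require Import structures.
From mathcomp Require Import all_boot all_order all_algebra all_field.
Set Implicit Arguments. Unset Strict Implicit. Unset Printing Implicit Defensive.
Import GRing.Theory.
Local Open Scope ring_scope.

Definition qdigit (q i u : nat) : nat := (u %/ q ^ i) %% q.
Definition wtq (q n u : nat) : nat := (\sum_(i < n) qdigit q i u)%N.
Definition Oq (q n u : nat) : nat := (\sum_(i < n | odd i) qdigit q i u)%N.
Definition Eq (q n u : nat) : nat := (\sum_(i < n | ~~ odd i) qdigit q i u)%N.
Definition absdiff (a b : nat) : nat := (a - b + (b - a))%N.

(* y \in Z_r  (wt_q(u) <= n(q-1) - r - 1 written without truncation) *)
Definition inZ (F : finFieldType) (q n r : nat) (alpha y : F) : Prop :=
  exists u : nat, [/\ (0 < u <= q ^ n - 1)%N,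
                      (wtq q n u + r + 1 <= n * (q - 1))%N & alpha ^+ u = y].

Definition inTheta (F : finFieldType) (q n r k : nat) (alpha y : F) : Prop :=
  exists u : nat, [/\ (u <= q ^ n - 1)%N, (wtq q n u + r = n * (q - 1))%N,
                      absdiff (Oq q n u) (Eq q n u) = k & alpha ^+ u = y].

Definition inM (q m r k : nat) : bool := (k <= m * (q - 1))%N && (odd k == odd r).

Definition inZrI (F : finFieldType) (q n m r : nat) (I : pred nat) (alpha y : F) : Prop :=
  inZ q n r alpha y \/
  exists k : nat, [/\ inM q m r k, ~~ I k & inTheta q n r k alpha y].

Definition Lambda (F : finFieldType) (x : F -> F) (s : nat) : F :=
  \sum_(g : F | g != 0) x g * g ^+ s.

(* x (indexed by F^*, values in F_q = {y | y^q = y}) is in C_q(r,I,n)^* *)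
Definition in_code (F : finFieldType) (q n m r : nat) (I : pred nat) (alpha : F)
  (x : F -> F) : Prop :=
  (forall g : F, g != 0 -> x g ^+ q = x g) /\
  (forall u : nat, (1 <= u <= q ^ n - 1)%N -> inZrI q n m r I alpha (alpha ^+ u) ->
     Lambda x u = 0).

Definition hweight (F : finFieldType) (x : F -> F) : nat :=
  #|[pred g : F | (g != 0) && (x g != 0)]|.

Definition locator (F : finFieldType) (x : F -> F) : {poly F} :=
  \prod_(g : F | (g != 0) && (x g != 0)) (1 - g%:P * 'X).

Definition Iset (q k : nat) : seq nat := [seq (q ^ k - q ^ j)%N | j <- iota 0 k].

(* Main.v *)
Require Import Defs.
From HB Require Import structures.
From mathcomp Require Import all_boot all_order all_algebra all_field zify.
Import GRing.Theory.

Lemma qd0 q u : qdigit q 0 u = u %% q.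
Proof. by rewrite /qdigit expn0 divn1. Qed.

Lemma qdS q i u : qdigit q i.+1 u = qdigit q i (u %/ q).
Proof. by rewrite /qdigit expnS divnMA. Qed.

Lemma qd_small q i u : u < q ^ i -> qdigit q i u = 0.
Proof. by move=> h; rewrite /qdigit divn_small ?mod0n. Qed.

Lemma qd_lt q i u : 0 < q -> qdigit q i u < q.
Proof. by move=> h; rewrite /qdigit ltn_pmod. Qed.

Lemma num_digits q K u : 0 < q -> u < q ^ K -> u = \sum_(i < K) qdigit q i u * q ^ i.
Proof.
move=> q0; elim: K u => [|K IH] u hu.
  by rewrite big_ord0; move: hu; rewrite expn0; case: u.
rewrite big_ord_recl qd0 expn0 muln1.
under eq_bigr => i _ do rewrite qdS expnS mulnCA.
rewrite -big_distrr /= -IH; last by rewrite ltn_divLR // -expnSr.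
by rewrite addnC mulnC -divn_eq.
Qed.

Lemma decompE q K s : 0 < q -> s < q ^ K.+1 ->
  q ^ K.+1 - 1 - s = (q ^ K - 1 - s %/ q) * q + (q - 1 - s %% q).
Proof.
move=> q0 hs.
have ha : s %/ q < q ^ K by rewrite ltn_divLR // -expnSr.
have hb : s %% q < q by rewrite ltn_pmod.
rewrite {1}(divn_eq s q) expnSr.
move: ha hb; set a := s %/ q; set b := s %% q; set Q := q ^ K => ha hb.
nia.
Qed.

Lemma qd_compl q K s i : 0 < q -> s < q ^ K -> i < K ->
  qdigit q i (q ^ K - 1 - s) = q - 1 - qdigit q i s.
Proof.
move=> q0; elim: i K s => [|i IH] [|K] s // hs hi.
  rewrite !qd0 decompE // modnMDl modn_small //.
  clear hs hi. lia.
rewrite !qdS decompE // divnMDl // [(q - 1 - _) %/ q]divn_small ?addn0; last first.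
  by have := ltn_pmod s q0; lia.
by apply: IH => //; rewrite ltn_divLR // -expnSr.
Qed.

Lemma qd_shift q K w i : 1 < q -> w < q ^ K ->
  qdigit q i (q ^ K + w) = qdigit q i w + (i == K).
Proof.
move=> q1; have q0 : 0 < q by lia.
elim: i K w => [|i IH] [|K] w hw.
- move: hw; rewrite expn0 => /[dup] hw; rewrite ltnS leqn0 => /eqP ->.
  by rewrite !qd0 mod0n modn_small.
- by rewrite !qd0 expnSr modnMDl addn0.
- move: hw; rewrite expn0 ltnS leqn0 => /eqP ->.
  rewrite !qdS add1n addn0 /= divn_small // div0n.
  by rewrite /qdigit div0n mod0n.
- rewrite !qdS expnSr divnMDl // IH //; last by rewrite ltn_divLR // -expnSr.
Qed.
Lemma cnt_odd n K c :
  \sum_(i < n | odd i) (if i < K then c else 0) = (minn n K)./2 * c.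
Proof.
elim: n => [|n IH]; first by rewrite big_ord0 min0n.
rewrite big_mkcond big_ord_recr -big_mkcond /= IH.
case: (ltnP n K) => hnK.
- have -> : minn n.+1 K = (minn n K).+1 by lia.
  have -> : minn n K = n by lia.
  have -> : n.+1./2 = n./2 + odd n by lia.
  by case: (odd n); rewrite /= ?mulnDl ?mul1n ?addn0 ?mul0n.
- have -> : minn n.+1 K = minn n K by lia.
  by case: (odd n); rewrite /= ?addn0 ?(minn_idPr hnK) ?ltnNge ?hnK ?addn0.
Qed.

Lemma cnt_even n K c :
  \sum_(i < n | ~~ odd i) (if i < K then c else 0) = uphalf (minn n K) * c.
Proof.
elim: n => [|n IH]; first by rewrite big_ord0 min0n.
rewrite big_mkcond big_ord_recr -big_mkcond /= IH.
case: (ltnP n K) => hnK.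
- have -> : minn n.+1 K = (minn n K).+1 by lia.
  have -> : minn n K = n by lia.
  have -> : uphalf n.+1 = uphalf n + ~~ odd n by lia.
  by case: (odd n); rewrite /= ?mulnDl ?mul1n ?addn0 ?mul0n.
- have -> : minn n.+1 K = minn n K by lia.
  by case: (odd n); rewrite /= ?addn0 ?(minn_idPr hnK) ?ltnNge ?hnK ?addn0.
Qed.

Lemma cnt_all n K c :
  \sum_(i < n) (if i < K then c else 0) = minn n K * c.
Proof.
elim: n => [|n IH]; first by rewrite big_ord0 min0n.
rewrite big_ord_recr /= IH.
case: (ltnP n K) => hnK.
- by rewrite (minn_idPl hnK) mulSn addnC.
- by rewrite addn0 (minn_idPr (leqW hnK)).
Qed.

Lemma sum_ind (P : pred nat) n K : K < n ->
  \sum_(i < n | P i) ((i : nat) == K : nat) = P K.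
Proof.
move=> hK; case PK: (P K).
  rewrite (bigD1 (Ordinal hK)) //= eqxx big1 // => i /andP[_ ne].
  by apply/eqP; rewrite eqb0; apply: contra ne => /eqP h; apply/eqP/val_inj.
rewrite big1 // => i Pi; case: eqP => // h; by rewrite -h Pi in PK.
Qed.

Lemma compl_sum (P : pred nat) q n K s : 0 < q -> K <= n -> s < q ^ K ->
  \sum_(i < n | P i) qdigit q i s + \sum_(i < n | P i) qdigit q i (q ^ K - 1 - s)
  = \sum_(i < n | P i) (if i < K then q - 1 else 0).
Proof.
move=> q0 Kn hs; rewrite -big_split; apply: eq_bigr => i _ /=.
case: ltnP => h.
  by rewrite qd_compl //; have := qd_lt q i s q0; lia.
have hK : q ^ K <= q ^ i by apply: leq_pexp2l.
by rewrite !qd_small //; lia.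
Qed.

Lemma shift_sum (P : pred nat) q n K w : 1 < q -> K < n -> w < q ^ K ->
  \sum_(i < n | P i) qdigit q i (q ^ K + w) = \sum_(i < n | P i) qdigit q i w + P K.
Proof.
move=> q1 Kn hw; rewrite -(@sum_ind P n K Kn) -big_split; apply: eq_bigr => i _ /=.
by rewrite qd_shift.
Qed.

Lemma OE_wt q n u : Oq q n u + Eq q n u = wtq q n u.
Proof. by rewrite /wtq (bigID (fun i : 'I_n => odd i)). Qed.

Lemma O_bound q m u : 0 < q -> Oq q (2 * m) u <= m * (q - 1).
Proof.
move=> q0; rewrite /Oq.
apply: (@leq_trans (\sum_(i < 2 * m | odd i) (if i < 2 * m then q - 1 else 0))).
  apply: leq_sum => i _; rewrite ltn_ord.
  by have := qd_lt q i u q0; lia.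
rewrite cnt_odd minnn (_ : (2 * m)./2 = m) //; lia.
Qed.

Lemma E_bound q m u : 0 < q -> Eq q (2 * m) u <= m * (q - 1).
Proof.
move=> q0; rewrite /Eq.
apply: (@leq_trans (\sum_(i < 2 * m | ~~ odd i) (if i < 2 * m then q - 1 else 0))).
  apply: leq_sum => i _; rewrite ltn_ord.
  by have := qd_lt q i u q0; lia.
rewrite cnt_even minnn (_ : uphalf (2 * m) = m) //; lia.
Qed.

Lemma wt_bound q n u : 0 < q -> u < q ^ n -> u <= wtq q n u * q ^ n.
Proof.
move=> q0 hu; rewrite {1}(@num_digits q n u q0 hu) /wtq big_distrl /=.
apply: leq_sum => i _; rewrite leq_mul2l leq_pexp2l ?orbT //; exact: ltnW.
Qed.

Lemma wt1 q n u : 1 < q -> u < q ^ n -> wtq q n u = 1 -> exists2 a, a < n & u = q ^ a.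
Proof.
move=> q1 hu hw; have q0 : 0 < q by lia.
have [a ha] : exists a : 'I_n, qdigit q a u != 0.
  apply/existsP; apply: contraT; rewrite negb_exists => /forallP h0.
  by move: hw; rewrite /wtq big1 // => i _; apply/eqP; have := h0 i; rewrite negbK.
exists a => //.
move: hw; rewrite /wtq (bigD1 a) //=.
have hd : qdigit q a u < q by apply: qd_lt.
move: ha hd; case hda: (qdigit q a u) => [|[|d]] // _ _ [] hS.
have hrest : forall i : 'I_n, i != a -> qdigit q i u = 0.
  move=> i ne; apply/eqP; move/eqP: hS.
  by rewrite sum_nat_eq0 => /forallP /(_ i); rewrite ne.
rewrite (@num_digits q n u q0 hu) (bigD1 a) //= big1 ?addn0 ?hda ?mul1n //.
by move=> i ne; rewrite hrest.
Qed.

Lemma caseI q n K s : 1 < q -> 0 < K -> K <= n -> 0 < s -> s < q ^ K - 1 ->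
  (wtq q n s + 2 <= K * (q - 1)) \/
  (wtq q n s + 1 = K * (q - 1) /\
   (if odd K then (absdiff (Oq q n s) (Eq q n s) == q - 2) || (absdiff (Oq q n s) (Eq q n s) == q)
    else absdiff (Oq q n s) (Eq q n s) == 1)).
Proof.
move=> q1 K0 Kn s0 sK; have q0 : 0 < q by lia.
have hs : s < q ^ K by lia.
have hvK : q ^ K - 1 - s < q ^ K by lia.
have hvn : q ^ K - 1 - s < q ^ n by apply: (leq_trans hvK); apply: leq_pexp2l.
have hW : 0 < wtq q n (q ^ K - 1 - s).
  have := @wt_bound q n _ q0 hvn; case: (wtq q n _) => //; lia.
have hwt : wtq q n s + wtq q n (q ^ K - 1 - s) = K * (q - 1).
  by have := @compl_sum predT q n K s q0 Kn hs; rewrite cnt_all (minn_idPr Kn).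
have hO := @compl_sum odd q n K s q0 Kn hs; rewrite cnt_odd (minn_idPr Kn) in hO.
have hE := @compl_sum (fun i => ~~ odd i) q n K s q0 Kn hs; rewrite cnt_even (minn_idPr Kn) in hE.
have hOE := OE_wt q n (q ^ K - 1 - s).
have hOEs := OE_wt q n s.
have hKq : K * (q - 1) = K./2 * (q - 1) + uphalf K * (q - 1).
  by rewrite -mulnDl; congr (_ * _); lia.
rewrite /absdiff; rewrite -/(Oq q n s) -/(Eq q n s) -/(Oq q n _) -/(Eq q n _) in hO hE hOE hOEs *.
case oK: (odd K).
  have hU : uphalf K = K./2 + 1 by lia.
  rewrite hU mulnDl mul1n in hE hKq.
  lia.
have hU : uphalf K = K./2 by lia.
rewrite hU in hE hKq.
lia.
Qed.

Lemma caseII q n K u : 1 < q -> 0 < K -> K < n -> 0 < u -> u < q ^ K - 1 ->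
  (forall a, a < K -> u != q ^ K - q ^ a) ->
  (wtq q n (q ^ K + (u - 1)) + 2 <= K * (q - 1)) \/
  (wtq q n (q ^ K + (u - 1)) + 1 = K * (q - 1) /\
   (if odd K then
      [|| absdiff (Oq q n (q ^ K + (u - 1))) (Eq q n (q ^ K + (u - 1))) == q - 2,
          absdiff (Oq q n (q ^ K + (u - 1))) (Eq q n (q ^ K + (u - 1))) == q
        | absdiff (Oq q n (q ^ K + (u - 1))) (Eq q n (q ^ K + (u - 1))) == absdiff q 4]
    else (absdiff (Oq q n (q ^ K + (u - 1))) (Eq q n (q ^ K + (u - 1))) == 1) ||
         (absdiff (Oq q n (q ^ K + (u - 1))) (Eq q n (q ^ K + (u - 1))) == 3))).
Proof.
move=> q1 K0 Kn u0 uK notI; have q0 : 0 < q by lia.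
have Kn' : K <= n by lia.
have hs : u - 1 < q ^ K by lia.
have hvK : q ^ K - 1 - (u - 1) < q ^ K by lia.
have hKn : q ^ K <= q ^ n by apply: leq_pexp2l.
have hvn : q ^ K - 1 - (u - 1) < q ^ n by apply: (leq_trans hvK).
have hW : 0 < wtq q n (q ^ K - 1 - (u - 1)).
  have := @wt_bound q n _ q0 hvn; case: (wtq q n _) => //; lia.
have hW1 : wtq q n (q ^ K - 1 - (u - 1)) != 1.
  apply/negP => /eqP /(@wt1 q n _ q1 hvn) [a an ha].
  have aK : a < K by rewrite -(ltn_exp2l _ _ q1) -ha.
  by move: (notI a aK); rewrite -ha; lia.
have hwt : wtq q n (u - 1) + wtq q n (q ^ K - 1 - (u - 1)) = K * (q - 1).
  by have := @compl_sum predT q n K (u - 1) q0 Kn' hs; rewrite cnt_all (minn_idPr Kn').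
have hO := @compl_sum odd q n K (u - 1) q0 Kn' hs; rewrite cnt_odd (minn_idPr Kn') in hO.
have hE := @compl_sum (fun i => ~~ odd i) q n K (u - 1) q0 Kn' hs;
  rewrite cnt_even (minn_idPr Kn') in hE.
have hOE := OE_wt q n (q ^ K - 1 - (u - 1)).
have hOEs := OE_wt q n (u - 1).
have ht : wtq q n (q ^ K + (u - 1)) = wtq q n (u - 1) + 1.
  exact: (@shift_sum predT q n K (u - 1) q1 Kn hs).
have hOt := @shift_sum odd q n K (u - 1) q1 Kn hs.
have hEt := @shift_sum (fun i => ~~ odd i) q n K (u - 1) q1 Kn hs.
have hKq : K * (q - 1) = K./2 * (q - 1) + uphalf K * (q - 1).
  by rewrite -mulnDl; congr (_ * _); lia.
rewrite /absdiff ht.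
rewrite /Oq /Eq /wtq /= in hO hE hOE hOEs hOt hEt hwt hW hW1 *.
case oK: (odd K) hOt hEt => /= hOt hEt.
  have hU : uphalf K = K./2 + 1 by lia.
  rewrite hU mulnDl mul1n in hE hKq.
  lia.
have hU : uphalf K = K./2 by lia.
rewrite hU in hE hKq.
lia.
Qed.

From mathcomp Require Import ring.
Local Open Scope ring_scope.

Section Alg.
Variables (F : finFieldType) (x : F -> F).

Lemma size_lin (h : F) : h != 0 -> size (1 - h%:P * 'X) = 2%N.
Proof.
move=> h0; have -> : 1 - h%:P * 'X = (- h)%:P * 'X + 1%:P.
  by rewrite addrC polyCN mulNr.
by rewrite size_MXaddC polyC_eq0 oppr_eq0 (negbTE h0) /= size_polyC oppr_eq0 h0.
Qed.

Lemma size_loc : (size (locator x) <= hweight x + 1)%N.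
Proof.
rewrite /locator size_prod; last by move=> g /andP[g0 _]; rewrite -size_poly_eq0 size_lin.
rewrite (eq_bigr (fun _ => 2%N)); last by move=> g /andP[g0 _]; rewrite size_lin.
rewrite sum_nat_const /hweight; set c := #|_|.
lia.
Qed.

Lemma loc0 : (locator x)`_0 = 1.
Proof.
rewrite -horner_coef0 /locator horner_prod big1 // => g _.
by rewrite hornerD hornerN hornerM !hornerC hornerX mulr0 subr0.
Qed.

Lemma loc_root g : g != 0 -> x g != 0 -> (locator x).[g^-1] = 0.
Proof.
move=> g0 xg0; rewrite /locator horner_prod (bigD1 g) /=; last by rewrite g0 xg0.
by rewrite hornerD hornerN hornerM !hornerC hornerX divff // subrr mul0r.
Qed.

Lemma Lsum (P : {poly F}) w : (size P <= w)%N ->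
  \sum_(g : F | g != 0) x g * P.[g] = \sum_(i < w) P`_i * Lambda x i.
Proof.
move=> hP; under eq_bigr => g _ do rewrite (horner_coef_wide _ hP) mulr_sumr.
rewrite exchange_big /=; apply: eq_bigr => i _.
rewrite /Lambda mulr_sumr; apply: eq_bigr => g _; by rewrite mulrCA.
Qed.

Lemma recur s : (hweight x <= s)%N ->
  \sum_(i < hweight x + 1) (locator x)`_i * Lambda x (s - i) = 0.
Proof.
move=> hs.
under eq_bigr => i _ do rewrite /Lambda mulr_sumr.
rewrite exchange_big /= big1 // => g g0.
case: (eqVneq (x g) 0) => xg.
  by rewrite big1 // => i _; rewrite xg mul0r mulr0.
have := @loc_root g g0 xg; rewrite (horner_coef_wide _ size_loc) => h0.
transitivity (x g * g ^+ s * \sum_(i < hweight x + 1) (locator x)`_i * g^-1 ^+ i).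
  rewrite mulr_sumr; apply: eq_bigr => i _.
  have his : (i <= s)%N by have := ltn_ord i; lia.
  rewrite exprVn (expfB_cond (x := g)); last by rewrite (negbTE g0).
  ring.
by rewrite h0 mulr0.
Qed.

Lemma Ldelta_neq0 d : hweight x = d -> (0 < d)%N ->
  (forall s : nat, (1 <= s <= d - 1)%N -> Lambda x s = 0) -> Lambda x d != 0.
Proof.
move=> hw d0 hL.
have : (0 < #|[pred g : F | (g != 0%R) && (x g != 0%R)]|)%N by rewrite -/(hweight x) hw.
case/card_gt0P => h; rewrite inE => /andP[h0 xh0].
set Q := \prod_(g : F | ((g != 0) && (x g != 0)) && (g != h)) ('X - g%:P).
have hQ0 : Q != 0.
  by rewrite prodf_seq_neq0; apply/allP => g _; apply/implyP => _; rewrite polyXsubC_eq0.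
have sQ : size Q = d.
  rewrite /Q size_prod; last by move=> g _; rewrite polyXsubC_eq0.
  rewrite (eq_bigr (fun _ => 2%N)); last by move=> g _; rewrite size_XsubC.
  rewrite sum_nat_const.
  have : #|(fun g : F => ((g != 0) && (x g != 0)) && (g != h))| = d.-1.
    rewrite -hw /hweight [in RHS](cardD1 h) inE h0 xh0 /=; apply: eq_card => g.
    by rewrite !inE andbC.
  move=> ->; lia.
set P := 'X * Q.
have sP : (size P <= d + 1)%N by rewrite /P mulrC size_mulX // sQ addn1.
have := @Lsum P (d + 1) sP; rewrite addn1 big_ord_recr /= [X in _ = X + _]big1; last first.
  move=> i _; case: (posnP i) => [-> | ip].
    by rewrite /P coefXM eqxx mul0r.
  by rewrite hL ?mulr0 //; have := ltn_ord i; lia.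
rewrite add0r (bigD1 h) //= big1; last first.
  move=> g /andP[g0 ne]; case: (eqVneq (x g) 0) => [-> | xg]; first by rewrite mul0r.
  rewrite /P /Q hornerM horner_prod (bigD1 g) /=; last by rewrite g0 xg ne.
  by rewrite hornerXsubC subrr mul0r !mulr0.
rewrite addr0 => hh; apply/eqP => Ld; move: hh; rewrite Ld mulr0.
apply/eqP; rewrite mulf_neq0 // /P hornerM hornerX mulf_neq0 //.
rewrite /Q horner_prod prodf_seq_neq0; apply/allP => g _; apply/implyP => /andP[_ ne].
by rewrite hornerXsubC subr_eq0 eq_sym.
Qed.


Lemma sum_delta w j (c : F) : (j < w)%N ->
  \sum_(i < w) (if (i : nat) == j then c else 0) = c.
Proof.
move=> hj; rewrite (bigD1 (Ordinal hj)) //= eqxx big1 ?addr0 // => i ne.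
by rewrite ifN //; apply: contra ne => /eqP h; apply/eqP/val_inj.
Qed.

Lemma sigma_form d (J : pred nat) :
  hweight x = d -> (0 < d)%N ->
  (forall s : nat, (1 <= s <= d - 1)%N -> Lambda x s = 0) ->
  (forall i, (1 <= i <= d - 1)%N -> ~~ J i -> Lambda x (d + i) = 0) ->
  (forall i j, (0 < i)%N -> (0 < j)%N -> J i -> J j -> (d < i + j)%N) ->
  forall u, (1 <= u <= d)%N -> (locator x)`_u = - (Lambda x (d + u) / Lambda x d).
Proof.
move=> hw d0 hL hJ0 hJ.
have Ld := @Ldelta_neq0 d hw d0 hL.
elim/ltn_ind => u IH hu.
have := @recur (d + u); rewrite hw => /(_ (leq_addr _ _)) hr.
have : \sum_(i < d + 1) ((if (i : nat) == 0%N then Lambda x (d + u) else 0) +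
         (if (i : nat) == u then (locator x)`_u * Lambda x d else 0)) = 0.
  rewrite -{}[RHS]hr; apply: eq_bigr => i _.
  have hi := ltn_ord i.
  case: (eqVneq (i : nat) 0%N) => [-> | i0].
    have -> : (0 == u)%N = false by lia.
    by rewrite loc0 subn0 mul1r addr0.
  case: (eqVneq (i : nat) u) => [-> | iu].
    by rewrite add0r (_ : (d + u - u = d)%N) //; lia.
  rewrite add0r.
  case: (ltnP u i) => ui.
    by rewrite hL ?mulr0 //; lia.
  have iu' : (i < u)%N by lia.
  rewrite (IH i iu'); last by lia.
  case Ji: (J i).
    have Jui : ~~ J (u - i)%N by apply/negP => Jui; have := hJ i (u - i)%N (ltac:(lia)) (ltac:(lia)) Ji Jui; lia.
    have e : (d + u - i = d + (u - i))%N by lia.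
    by rewrite e (hJ0 (u - i)%N _ Jui) ?mulr0 //; lia.
  by rewrite hJ0 ?Ji // ?mul0r ?oppr0 ?mul0r //; lia.
rewrite big_split /= !sum_delta; [|lia|lia].
move/eqP; rewrite addr_eq0 => /eqP h.
by rewrite h mulNr opprK mulfK.
Qed.

End Alg.

Lemma IsetP q K u : reflect (exists2 a, (a < K)%N & u = (q ^ K - q ^ a)%N) (u \in Iset q K).
Proof.
apply: (iffP mapP) => [[a]|[a]]; rewrite ?mem_iota => ha ->; exists a => //.
by rewrite mem_iota.
Qed.

Lemma code_Z (F : finFieldType) q m r (I : pred nat) (alpha : F) x t :
  in_code q (2 * m) m r I alpha x -> (1 <= t <= q ^ (2 * m) - 1)%N ->
  (wtq q (2 * m) t + r + 1 <= 2 * m * (q - 1))%N -> Lambda x t = 0.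
Proof.
case=> _ hc ht hw; apply: hc => //; left; exists t; split => //; lia.
Qed.

Lemma code_T (F : finFieldType) q m r (I : pred nat) (alpha : F) x t :
  (0 < q)%N -> in_code q (2 * m) m r I alpha x -> (1 <= t <= q ^ (2 * m) - 1)%N ->
  (wtq q (2 * m) t + r = 2 * m * (q - 1))%N ->
  ~~ I (absdiff (Oq q (2 * m) t) (Eq q (2 * m) t)) -> Lambda x t = 0.
Proof.
move=> q0 [_ hc] ht hw hI; apply: hc => //; right.
exists (absdiff (Oq q (2 * m) t) (Eq q (2 * m) t)); split => //; last first.
  by exists t; split => //; lia.
have := @O_bound q m t q0; have := @E_bound q m t q0; have := OE_wt q (2 * m) t.
rewrite /inM /absdiff => h1 h2 h3; apply/andP; split; first lia.
apply/eqP; lia.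
Qed.

Lemma arithZ w K rho q nn : nn = (K + rho)%N -> (w + 2 <= K * (q - 1))%N ->
  (w + (rho * (q - 1) + 1) + 1 <= nn * (q - 1))%N.
Proof. move=> -> h; rewrite mulnDl; lia. Qed.

Lemma arithT w K rho q nn : nn = (K + rho)%N -> (w + 1 = K * (q - 1))%N ->
  (w + (rho * (q - 1) + 1) = nn * (q - 1))%N.
Proof. move=> -> h; rewrite mulnDl; lia. Qed.

Theorem proposition5p1 (F : finFieldType) (p l m rho : nat) (alpha : F)
  (I : pred nat) (x : F -> F) :
  prime p -> (0 < l)%N -> (0 < m)%N ->
  let q := (p ^ l)%N in let n := (2 * m)%N in let N := (q ^ n - 1)%N in
  #|F| = (q ^ n)%N -> N.-primitive_root alpha ->
  (rho <= n - 1)%N ->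
  let r := (rho * (q - 1) + 1)%N in
  (forall k, I k -> inM q m r k) ->
  (if odd rho then [&& ~~ I q, ~~ I (q - 2)%N & ~~ I (absdiff q 4)]
   else ~~ I 1%N && ~~ I 3%N) ->
  let delta := (q ^ (n - rho) - 1)%N in
  in_code q n m r I alpha x -> hweight x = delta ->
  let sigma := locator x in
  [/\ (forall s : nat, (1 <= s <= delta - 1)%N -> Lambda x s = 0),
      (forall u : nat, (1 <= u <= delta - 1)%N ->
         (u \notin Iset q (n - rho) -> Lambda x (delta + u) = 0 /\ sigma`_u = 0) /\
         (u \in Iset q (n - rho) ->
            Lambda x delta != 0 /\ sigma`_u = - (Lambda x (delta + u) / Lambda x delta)))
    & sigma = 1 - \sum_(j < n - rho)
                    (Lambda x (delta + (q ^ (n - rho) - q ^ j)) / Lambda x delta)%:P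
                    * 'X ^+ (q ^ (n - rho) - q ^ j)%N].
Proof.
move=> pp l0 m0 q n N hcard _ hrho r _ hIc delta hcode hw sigma.
have q1 : (1 < q)%N.
  have hp := prime_gt1 pp; rewrite /q.
  have := @leq_pexp2l p 1 l (ltnW hp) l0; rewrite expn1; lia.
have q0 : (0 < q)%N by lia.
have nE : n = (2 * m)%N by [].
have rE : r = (rho * (q - 1) + 1)%N by [].
set K := (n - rho)%N.
have dE : delta = (q ^ K - 1)%N by [].
have K0 : (0 < K)%N by rewrite /K; lia.
have Kn : (K <= n)%N by rewrite /K; lia.
have nK : n = (K + rho)%N by rewrite /K; lia.
have oK : odd rho = odd K by rewrite /K; lia.
have hnq : (n * (q - 1) = K * (q - 1) + rho * (q - 1))%N by rewrite nK mulnDl.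
have qK : (q <= q ^ K)%N by rewrite -{1}(expn1 q); apply: leq_pexp2l.
have qKn : (q ^ K <= q ^ n)%N by apply: leq_pexp2l.
have d0 : (0 < delta)%N by lia.
have hk : forall k, (if odd K then [|| k == q - 2, k == q | k == absdiff q 4]
                     else (k == 1) || (k == 3))%N -> ~~ I k.
  move=> k; rewrite -oK; case: (odd rho) hIc => /=.
    by case/and3P => h1 h2 h3 /or3P [] /eqP ->.
  by case/andP => h1 h2 /orP [] /eqP ->.
have hL : forall s : nat, (1 <= s <= delta - 1)%N -> Lambda x s = 0.
  move=> s hs.
  have hsN : (1 <= s <= q ^ (2 * m) - 1)%N by rewrite -nE; lia.
  have := @caseI q n K s q1 K0 Kn (ltac:(lia)) (ltac:(lia)); case=> [h | [h1 h2]].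
    by apply: (@code_Z F q m r I alpha x _ hcode hsN); rewrite -nE rE; exact: arithZ nK h.
  apply: (@code_T F q m r I alpha x _ q0 hcode hsN); first by rewrite -nE rE; exact: arithT nK h1.
  apply: hk; rewrite -nE; case: (odd K) h2 => /= h2; first by case/orP: h2 => ->; rewrite ?orbT.
  by rewrite h2.
have gN : forall g : F, g != 0 -> g ^+ N = 1.
  move=> g g0; apply: (mulfI g0); rewrite mulr1 -exprS.
  have -> : N.+1 = #|F| by rewrite hcard /N; have := expn_gt0 q n; lia.
  exact: expf_card.
have LN : forall s, Lambda x (N + s) = Lambda x s.
  by move=> s; apply: eq_bigr => g g0; rewrite exprD gN // mul1r.
have hJ0 : forall i, (1 <= i <= delta - 1)%N -> i \notin Iset q K -> Lambda x (delta + i) = 0.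
  move=> i hi niI.
  case: (ltnP K n) => hKn; last first.
    have KnE : K = n by lia.
    by rewrite dE KnE -/N LN hL.
  have notI : forall a, (a < K)%N -> i != (q ^ K - q ^ a)%N.
    by move=> a aK; apply: contra niI => /eqP ->; apply/IsetP; exists a.
  have hq2 : (q ^ K.+1 <= q ^ n)%N by apply: leq_pexp2l.
  have hq3 : (2 * q ^ K <= q ^ K.+1)%N by rewrite expnS leq_mul2r q1 orbT.
  have e : (delta + i = q ^ K + (i - 1))%N by lia.
  have htN : (1 <= q ^ K + (i - 1) <= q ^ (2 * m) - 1)%N by rewrite -nE; lia.
  rewrite e.
  have := @caseII q n K i q1 K0 hKn (ltac:(lia)) (ltac:(lia)) notI; case=> [h | [h1 h2]].
    by apply: (@code_Z F q m r I alpha x _ hcode htN); rewrite -nE rE; exact: arithZ nK h.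
  apply: (@code_T F q m r I alpha x _ q0 hcode htN); first by rewrite -nE rE; exact: arithT nK h1.
  apply: hk; rewrite -nE; case: (odd K) h2 => /= h2; first exact: h2.
  by case/orP: h2 => ->; rewrite ?orbT.
have hJ : forall i j, (0 < i)%N -> (0 < j)%N -> i \in Iset q K -> j \in Iset q K ->
    (delta < i + j)%N.
  move=> i j _ _ /IsetP [a aK ->] /IsetP [b bK ->].
  have hY : (2 * q ^ K.-1 <= q ^ K)%N by rewrite -{2}(prednK K0) expnS leq_mul2r q1 orbT.
  have ha : (q ^ a <= q ^ K.-1)%N by apply: leq_pexp2l; lia.
  have hb : (q ^ b <= q ^ K.-1)%N by apply: leq_pexp2l; lia.
  lia.
have Ld := @Ldelta_neq0 F x delta hw d0 hL.
have hsig := @sigma_form F x delta (fun i => i \in Iset q K) hw d0 hL hJ0 hJ.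
split => //.
  move=> u hu; split.
    move=> uI; have L0 := hJ0 u hu uI; split => //.
    by rewrite /sigma hsig; [rewrite L0 mul0r oppr0 | lia].
  by move=> uI; split => //; rewrite /sigma hsig //; lia.
apply/polyP => i; rewrite coefB coef1 coef_sum.
under eq_bigr => j _ do rewrite coefCM coefXn.
have sz : (size sigma <= delta + 1)%N by rewrite /sigma -hw size_loc.
have eK : forall j, (j < K)%N -> (1 <= q ^ K - q ^ j <= delta)%N.
  move=> j jK; have : (q ^ j < q ^ K)%N by rewrite ltn_exp2l.
  have := expn_gt0 q j; rewrite q0 /=; lia.
have nIsum : i \notin Iset q K ->
    \sum_(j < K) Lambda x (delta + (q ^ K - q ^ j)) / Lambda x delta *
      (i == q ^ K - q ^ j)%N%:R = 0.
  move=> niI; apply: big1 => j _; case: eqP; rewrite ?mulr0 // => ei.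
  by move: niI; rewrite ei; case/negP; apply/IsetP; exists j.
have [i0 | ip] : i = 0%N \/ (0 < i)%N by lia.
  rewrite nIsum ?subr0; first by rewrite i0 /sigma loc0.
  by apply/negP => /IsetP [a aK ea]; have := eK a aK; lia.
case: (leqP i delta) => hid; last first.
  rewrite nIsum; last first.
    by apply/negP => /IsetP [a aK ea]; have := eK a aK; lia.
  have -> : (i == 0)%N = false by lia.
  rewrite subr0 nth_default //; by apply: (leq_trans sz); rewrite addn1.
have -> : (i == 0)%N = false by lia.
rewrite /sigma hsig; last by lia.
rewrite sub0r; congr (- _).
case: (boolP (i \in Iset q K)) => iI.
  case/IsetP: iI => a aK ea.
  rewrite (bigD1 (Ordinal aK)) //= ea eqxx mulr1 big1 ?addr0 // => j ne.
  case: eqP; rewrite ?mulr0 // => e.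
  have : (q ^ j = q ^ a)%N.
    have := eK a aK; have := eK j (ltn_ord j).
    have : (q ^ a <= q ^ K)%N by apply: leq_pexp2l; lia.
    have : (q ^ j <= q ^ K)%N by apply: leq_pexp2l; have := ltn_ord j; lia.
    lia.
  move/(expnI q1) => ja; case/negP: ne; apply/eqP/val_inj => /=; exact: ja.
rewrite nIsum //.
have hi1 : (i <= delta - 1)%N.
  case: (eqVneq i delta) => [ed | ]; last by lia.
  by move: iI; rewrite ed; case/negP; apply/IsetP; exists 0%N => //; rewrite expn0.
by rewrite hJ0 ?mul0r //; lia.
Qed.
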